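(* Let $C$ be a coalgebra over a field $K$, let $S$ be a simple left $C$-comodule and let $E(S)\subseteq C$ be an injective envelope of $S$ contained in $C$ (as a left subcomodule). Then $S^\perp=\{\alpha\in E(S)^*\mid \alpha|_{S}=0\}$ is a maximal and small (superfluous) left $C^*$-submodule of $E(S)^*$, and $E(S)^*$ is generated as a left $C^*$-module by any $f\in E(S)^*$ with $f\notin S^\perp$. Consequently, $E(S)^*$ is an indecomposable left $C^*$-module.
   Context: $C^*=\mathrm{Hom}_K(C,K)$ is the dual algebra with convolution product. A left $C$-comodule $M$ (coaction $m\mapsto m_{-1}\otimes m_0$) is a right $C^*$-module via $m\cdot c^*=c^*(m_{-1})m_0$; its dual $M^*=\mathrm{Hom}_K(M,K)$ is then a left $C^*$-module via $(c^*\cdot\alpha)(m)=\alpha(m\cdot c^* )$. In particular $C$ itself is a left comodule via the comultiplication. *)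

(* Defs.v *)
(* Coalgebras and comodules over a field K, with tensors
   represented by finite lists of simple tensors, identified through
   their pairings with products of linear functionals. *)
From HB Require Import structures.
From mathcomp Require Import all_boot all_algebra.
Set Implicit Arguments. Unset Strict Implicit. Unset Printing Implicit Defensive.
Import GRing.Theory.
Local Open Scope ring_scope.

Section CoalgDefs.
Variable K : fieldType.

Definition lin_fun (V : lmodType K) (f : V -> K) : Prop :=
  forall a x y, f (a *: x + y) = a * f x + f y.
Definition lin_map (V W : lmodType K) (g : V -> W) : Prop :=
  forall a x y, g (a *: x + y) = a *: g x + g y.

Definition tev (A B : lmodType K) (f : A -> K) (h : B -> K) (t : seq (A * B)) : K :=
  \sum_(p <- t) f p.1 * h p.2.

Record coalgebra (C : lmodType K) := Coalgebra {
  delta : C -> seq (C * C);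
  eps : C -> K;
  eps_lin : lin_fun eps;
  delta_lin : forall f g : C -> K, lin_fun f -> lin_fun g ->
    forall a x y, tev f g (delta (a *: x + y)) = a * tev f g (delta x) + tev f g (delta y);
  delta_coassoc : forall f g h : C -> K, lin_fun f -> lin_fun g -> lin_fun h ->
    forall x, \sum_(p <- delta x) tev f g (delta p.1) * h p.2
            = \sum_(p <- delta x) f p.1 * tev g h (delta p.2);
  delta_counitl : forall x, \sum_(p <- delta x) eps p.1 *: p.2 = x;
  delta_counitr : forall x, \sum_(p <- delta x) eps p.2 *: p.1 = x }.

Record comodule (C : lmodType K) (cC : coalgebra C) (M : lmodType K) := Comodule {
  coact : M -> seq (C * M);
  coact_lin : forall (f : C -> K) (h : M -> K), lin_fun f -> lin_fun h ->
    forall a x y, tev f h (coact (a *: x + y)) = a * tev f h (coact x) + tev f h (coact y);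
  coact_coassoc : forall (f g : C -> K) (h : M -> K), lin_fun f -> lin_fun g -> lin_fun h ->
    forall x, \sum_(p <- coact x) tev f g (delta cC p.1) * h p.2
            = \sum_(p <- coact x) f p.1 * tev g h (coact p.2);
  coact_counit : forall x, \sum_(p <- coact x) eps cC p.1 *: p.2 = x }.

Definition colinear (C M N : lmodType K) (rM : M -> seq (C * M)) (rN : N -> seq (C * N))
  (g : M -> N) : Prop :=
  lin_map g /\
  forall (f : C -> K) (h : N -> K), lin_fun f -> lin_fun h ->
    forall x, tev f h (rN (g x)) = \sum_(p <- rM x) f p.1 * h (g p.2).

Definition inj_comodule (C : lmodType K) (cC : coalgebra C) (E : lmodType K)
  (cE : comodule cC E) : Prop :=
  forall (M N : lmodType K) (cM : comodule cC M) (cN : comodule cC N)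
         (i : M -> N) (u : M -> E),
    colinear (coact cM) (coact cN) i -> injective i ->
    colinear (coact cM) (coact cE) u ->
    exists v : N -> E, colinear (coact cN) (coact cE) v /\ forall x, v (i x) = u x.

Definition subspace (M : lmodType K) (S : M -> Prop) : Prop :=
  S 0 /\ forall a x y, S x -> S y -> S (a *: x + y).

(* S is a subcomodule: subspace with rho(S) contained in C (x) S *)
Definition subcomod (C : lmodType K) (cC : coalgebra C) (M : lmodType K)
  (cM : comodule cC M) (S : M -> Prop) : Prop :=
  subspace S /\
  forall x, S x -> forall (f : C -> K) (h : M -> K), lin_fun f -> lin_fun h ->
    (forall y, S y -> h y = 0) -> tev f h (coact cM x) = 0.

Definition simple_subcomod (C : lmodType K) (cC : coalgebra C) (M : lmodType K)
  (cM : comodule cC M) (S : M -> Prop) : Prop :=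
  subcomod cM S /\ (exists x, S x /\ x <> 0) /\
  forall T, subcomod cM T -> (forall x, T x -> S x) ->
    (forall x, T x -> x = 0) \/ (forall x, S x -> T x).

Definition essential_in (C : lmodType K) (cC : coalgebra C) (M : lmodType K)
  (cM : comodule cC M) (S : M -> Prop) : Prop :=
  forall T, subcomod cM T -> (exists x, T x /\ x <> 0) ->
    exists x, T x /\ S x /\ x <> 0.

Definition ract (C : lmodType K) (cC : coalgebra C) (M : lmodType K)
  (cM : comodule cC M) (c : C -> K) (m : M) : M :=
  \sum_(p <- coact cM m) c p.1 *: p.2.

Definition lact (C : lmodType K) (cC : coalgebra C) (M : lmodType K)
  (cM : comodule cC M) (c : C -> K) (al : M -> K) : M -> K :=
  fun m => al (ract cM c m).

Definition dual_submod (C : lmodType K) (cC : coalgebra C) (M : lmodType K)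
  (cM : comodule cC M) (P : (M -> K) -> Prop) : Prop :=
  (forall al, P al -> lin_fun al) /\
  P (fun _ => 0) /\
  (forall a al be, P al -> P be -> P (fun m => a * al m + be m)) /\
  (forall c al, lin_fun c -> P al -> P (lact cM c al)).

Definition full_dual (M : lmodType K) (P : (M -> K) -> Prop) : Prop :=
  forall al, lin_fun al -> P al.

Definition zero_dual (M : lmodType K) (P : (M -> K) -> Prop) : Prop :=
  forall al, P al -> forall m, al m = 0.

Definition sum_full (M : lmodType K) (P Q : (M -> K) -> Prop) : Prop :=
  forall al, lin_fun al -> exists be ga, P be /\ Q ga /\ forall m, al m = be m + ga m.

Definition maximal_submod (C : lmodType K) (cC : coalgebra C) (M : lmodType K)
  (cM : comodule cC M) (P : (M -> K) -> Prop) : Prop :=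
  dual_submod cM P /\ ~ full_dual P /\
  forall Q, dual_submod cM Q -> (forall al, P al -> Q al) ->
    (forall al, Q al -> P al) \/ full_dual Q.

Definition small_submod (C : lmodType K) (cC : coalgebra C) (M : lmodType K)
  (cM : comodule cC M) (P : (M -> K) -> Prop) : Prop :=
  dual_submod cM P /\
  forall Q, dual_submod cM Q -> sum_full P Q -> full_dual Q.

Definition generates (C : lmodType K) (cC : coalgebra C) (M : lmodType K)
  (cM : comodule cC M) (f : M -> K) : Prop :=
  forall Q, dual_submod cM Q -> Q f -> full_dual Q.

Definition indecomposable_dual (C : lmodType K) (cC : coalgebra C) (M : lmodType K)
  (cM : comodule cC M) : Prop :=
  (exists al : M -> K, lin_fun al /\ exists m, al m <> 0) /\
  forall P Q, dual_submod cM P -> dual_submod cM Q ->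
    (forall al, P al -> Q al -> forall m, al m = 0) -> sum_full P Q ->
    zero_dual P \/ zero_dual Q.

Definition perp (M : lmodType K) (S : M -> Prop) : (M -> K) -> Prop :=
  fun al => lin_fun al /\ forall m, S m -> al m = 0.

End CoalgDefs.

(* Main.v *)
Require Import Defs.
From HB Require Import structures.
From mathcomp Require Import all_boot all_algebra.
From mathcomp Require Import ring.
From mathcomp Require Import boolp classical_sets.
Set Implicit Arguments. Unset Strict Implicit. Unset Printing Implicit Defensive.
Import GRing.Theory.
Local Open Scope ring_scope.
Local Open Scope classical_set_scope.

Section Ext.
Variable K : fieldType.
Variable V : lmodType K.

Definition gfun (A : V * K -> Prop) := forall x a b, A (x, a) -> A (x, b) -> a = b.
Definition gclo (A : V * K -> Prop) := forall k x a y b, A (x, a) -> A (y, b) -> A (k *: x + y, k * a + b).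

Lemma gzero (A : V * K -> Prop) x a : gclo A -> A (x, a) -> A (0, 0).
Proof.
move=> cl Ax; have := cl (-1) _ _ _ _ Ax Ax.
by rewrite scaleN1r mulN1r !addNr.
Qed.

Lemma extension (G0 : V * K -> Prop) : gfun G0 -> gclo G0 -> G0 (0, 0) ->
  exists c : V -> K, (forall k x y, c (k *: x + y) = k * c x + c y) /\
    forall x a, G0 (x, a) -> c x = a.
Proof.
move=> f0 c0 z0.
pose P (A : set (V * K)) := gfun A /\ gclo A /\ (forall p, A p -> G0 `<=` A).
have [] := @Zorn_bigcup _ P.
  move=> F FP Ftot.
  have two X Y p q : F X -> F Y -> X p -> Y q -> exists Z, F Z /\ Z p /\ Z q.
    move=> FX FY Xp Yq; case: (Ftot _ _ FX FY) => [XY|YX].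
      by exists Y; split=> //; split=> //; apply: XY.
    by exists X; split=> //; split=> //; apply: YX.
  split; [|split].
  - move=> x a b [X FX Xa] [Y FY Yb].
    have [Z [FZ [Za Zb]]] := two _ _ _ _ FX FY Xa Yb.
    by have [fZ _] := FP _ FZ; exact: fZ Za Zb.
  - move=> k x a y b [X FX Xa] [Y FY Yb].
    have [Z [FZ [Za Zb]]] := two _ _ _ _ FX FY Xa Yb.
    have [_ [cZ _]] := FP _ FZ; exists Z => //; exact: cZ.
  - move=> p [X FX Xp] q G0q; exists X => //.
    by have [_ [_ sX]] := FP _ FX; exact: sX Xp _ G0q.
move=> A [[fA [cA sA]] maxA].
have A00 : A (0, 0).
  apply: contrapT => nA.
  apply: (maxA G0); last by split=> //; split=> // p _.
  split; first by move=> p Ap; exfalso; apply: nA; case: p Ap => x a Ap; exact: gzero cA Ap.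
  move=> sub; apply: nA; exact: sub.
have sG0 : G0 `<=` A by exact: sA A00.
have tot : forall x, exists a, A (x, a).
  move=> x; apply: contrapT => nx.
  pose A' (p : V * K) := exists u k, A (u, p.2) /\ p.1 = u + k *: x.
  apply: (maxA A').
    split.
      by move=> [u a] Au; exists u, 0; split=> //; rewrite scale0r addr0.
    move=> sub; apply: nx; exists 0; apply: sub; exists 0, 1; split => //.
    by rewrite /= add0r scale1r.
  split; [|split].
  - move=> x0 a b [u [k [/= Au e]]] [u' [k' [/= Au' e']]].
    have kk : k = k'.
      apply: contrapT => /eqP nk; apply: nx.
      have := cA (-1) _ _ _ _ Au Au'; rewrite scaleN1r mulN1r => A1.
      have := cA (k - k')^-1 _ _ _ _ A1 A00; rewrite !addr0 => A2.
      eexists; rewrite -[x](@scalerK _ _ (k - k')); last by rewrite subr_eq0.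
      suff -> : (k - k') *: x = - u + u' by exact: A2.
      have ee : u + k *: x = u' + k' *: x by rewrite -e -e'.
      by rewrite scalerBl; apply/eqP; rewrite subr_eq -addrA -ee addrA addNr add0r.
    subst k'; rewrite e' in e; move/addIr: e => eu; rewrite eu in Au'; exact: fA Au Au'.
  - move=> k0 x1 a y b [u [k [/= Au e]]] [u' [k' [/= Au' e']]].
    exists (k0 *: u + u'), (k0 * k + k'); split; first exact: cA.
    rewrite /= e e' scalerDr scalerA scalerDl addrACA //.
  - move=> p _ [q1 q2] G0q; exists q1, 0; split; first exact: sG0.
    by rewrite scale0r addr0.
have /choice [c Hc] := tot.
exists c; split.
  move=> k x y; apply: (fA (k *: x + y)); first exact: Hc.
  exact: cA.
by move=> x a G0x; apply: (fA x); [exact: Hc | exact: sG0].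
Qed.
End Ext.

Section Main.
Variables (K : fieldType) (C : lmodType K) (cC : coalgebra C)
  (E : lmodType K) (cE : comodule cC E).

Lemma lin0 (V : lmodType K) (h : V -> K) : lin_fun h -> h 0 = 0.
Proof.
move=> L; have e := L 1 0 0; rewrite scale1r addr0 mul1r in e.
by apply: (@addrI _ (h 0)); rewrite addr0 -e.
Qed.

Lemma linD (V : lmodType K) (h : V -> K) x y : lin_fun h -> h (x + y) = h x + h y.
Proof. by move=> L; have := L 1 x y; rewrite scale1r mul1r. Qed.

Lemma linZ (V : lmodType K) (h : V -> K) a x : lin_fun h -> h (a *: x) = a * h x.
Proof. by move=> L; have := L a x 0; rewrite addr0 (lin0 L) addr0. Qed.

Lemma lin_sum (V : lmodType K) (h : V -> K) (I : Type) (s : seq I) (F : I -> V) :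
  lin_fun h -> h (\sum_(p <- s) F p) = \sum_(p <- s) h (F p).
Proof.
move=> L; elim: s => [|x s IH]; first by rewrite !big_nil lin0.
by rewrite !big_cons linD // IH.
Qed.

Lemma tev0 f h : lin_fun f -> lin_fun h -> tev f h (coact cE 0) = 0.
Proof.
move=> Lf Lh; have e := coact_lin cE Lf Lh 1 0 0.
rewrite scale1r addr0 mul1r in e.
by apply: (@addrI _ (tev f h (coact cE 0))); rewrite addr0 -e.
Qed.

Lemma tevB f h x y : lin_fun f -> lin_fun h ->
  tev f h (coact cE (x - y)) = tev f h (coact cE x) - tev f h (coact cE y).
Proof.
move=> Lf Lh.
have e1 := coact_lin cE Lf Lh (-1) y 0.
rewrite addr0 tev0 // addr0 scaleN1r mulN1r in e1.
have e2 := coact_lin cE Lf Lh 1 x (- y).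
by rewrite scale1r mul1r e1 in e2.
Qed.

Lemma tev_sum f h (I : Type) (s : seq I) (a : I -> K) (F : I -> E) :
  lin_fun f -> lin_fun h ->
  tev f h (coact cE (\sum_(p <- s) a p *: F p)) =
  \sum_(p <- s) a p * tev f h (coact cE (F p)).
Proof.
move=> Lf Lh; elim: s => [|x s IH]; first by rewrite !big_nil tev0.
by rewrite !big_cons coact_lin // IH.
Qed.

Lemma ractE c h m : lin_fun h -> h (ract cE c m) = tev c h (coact cE m).
Proof.
move=> Lh; rewrite /ract lin_sum //; apply: eq_bigr => p _; exact: linZ.
Qed.

Definition Tf (f : E -> K) m := forall c, lin_fun c -> tev c f (coact cE m) = 0.

Lemma ract_T f c' x : lin_fun f -> lin_fun c' -> Tf f x -> Tf f (ract cE c' x).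
Proof.
move=> Lf Lc' Tx c Lc; rewrite /ract tev_sum // -(coact_coassoc cE Lc' Lc Lf).
exact: (Tx _ (delta_lin cC Lc' Lc)).
Qed.

Lemma T_subcomod f : lin_fun f -> subcomod cE (Tf f).
Proof.
move=> Lf; split; first split.
- by move=> c Lc; exact: tev0.
- move=> a x y Tx Ty c Lc; by rewrite coact_lin // Tx // Ty // mulr0 addr0.
move=> x Tx f' h Lf' Lh hT; rewrite -ractE //; apply: hT; exact: ract_T.
Qed.

Lemma sep (V : lmodType K) (S : V -> Prop) y : subspace S -> ~ S y ->
  exists h : V -> K, lin_fun h /\ (forall s, S s -> h s = 0) /\ h y = 1.
Proof.
move=> [S0 Sc] nSy.
pose G0 (p : V * K) := exists s k, S s /\ p.1 = s + k *: y /\ p.2 = k.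
have [||| c [Lc Hc]] := @extension _ _ G0.
- move=> x a b [s [k [Ss [/= e1 ->]]]] [s' [k' [Ss' [/= e1' ->]]]].
  apply: contrapT => /eqP nk; apply: nSy.
  have A1 := Sc (-1) _ _ Ss Ss'; rewrite scaleN1r in A1.
  have A2 := Sc (k - k')^-1 _ _ A1 S0; rewrite !addr0 in A2.
  rewrite -[y](@scalerK _ _ (k - k')); last by rewrite subr_eq0.
  suff -> : (k - k') *: y = - s + s' by [].
  have ee : s + k *: y = s' + k' *: y by rewrite -e1 -e1'.
  by rewrite scalerBl; apply/eqP; rewrite subr_eq -addrA -ee addrA addNr add0r.
- move=> k0 x a z b [s [k [Ss [/= e1 ->]]]] [s' [k' [Ss' [/= e1' ->]]]].
  exists (k0 *: s + s'), (k0 * k + k'); split; first exact: Sc.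
  by rewrite /= e1 e1' scalerDr scalerA scalerDl addrACA.
- by exists 0, 0; split => //; rewrite /= scale0r addr0.
exists c; split => //; split.
  by move=> s Ss; apply: Hc; exists s, 0; rewrite scale0r addr0.
by apply: Hc; exists 0, 1; rewrite scale1r add0r.
Qed.

Lemma subcomod_ract (S : E -> Prop) x c : subcomod cE S -> S x -> lin_fun c ->
  S (ract cE c x).
Proof.
move=> [sS cS] Sx Lc; apply: contrapT => nS.
have [h [Lh [hS hy]]] := sep sS nS.
have := cS x Sx c h Lc Lh hS.
by rewrite -ractE // hy => /eqP; rewrite oner_eq0.
Qed.

Lemma gen (S : E -> Prop) f s : simple_subcomod cE S -> essential_in cE S ->
  lin_fun f -> S s -> f s != 0 -> forall al, lin_fun al ->
  exists c, lin_fun c /\ forall m, lact cE c f m = al m.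
Proof.
move=> simp ess Lf Ss fs al Lal.
have T0 : forall m, Tf f m -> m = 0.
  move=> m Tm; apply: contrapT => nm.
  have [x [Tx [Sx nx]]] := ess _ (T_subcomod Lf) (ex_intro _ m (conj Tm nm)).
  pose U y := exists c, lin_fun c /\ y = ract cE c x.
  have subU : subcomod cE U.
    split; first split.
    - exists (fun _ => 0); split; first by move=> *; rewrite mulr0 addr0.
      by rewrite /ract big1 // => p _; rewrite scale0r.
    - move=> a y z [c1 [L1 ->]] [c2 [L2 ->]]; exists (fun v => a * c1 v + c2 v); split.
        by move=> b u v; rewrite L1 L2; ring.
      rewrite /ract scaler_sumr -big_split /=; apply: eq_bigr => p _.
      by rewrite scalerA scalerDl.
    move=> y [c [Lc ->]] f' h Lf' Lh hU.
    rewrite /ract tev_sum // -(coact_coassoc cE Lc Lf' Lh).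
    have := hU _ (ex_intro _ _ (conj (delta_lin cC Lc Lf') erefl)).
    by rewrite ractE.
  have UsubS : forall y, U y -> S y by move=> y [c [Lc ->]]; exact: (subcomod_ract simp.1 Sx Lc).
  case: (simp.2.2 U subU UsubS) => [U0|SU].
    apply: nx; apply: U0; exists (eps cC); split; first exact: eps_lin.
    by rewrite /ract coact_counit.
  have [c [Lc e]] := SU s Ss.
  by move: fs; rewrite e ractE // Tx // eqxx.
pose G0 (p : C * K) := exists m, (forall c, lin_fun c -> c p.1 = tev c f (coact cE m)) /\ p.2 = al m.
have [||| c [Lc Hc]] := @extension _ _ G0.
- move=> v a b [m [Hm /= ->]] [m' [Hm' /= ->]] /=.
  have : m - m' = 0.
    by apply: T0 => c Lc; rewrite tevB // -Hm // -Hm' // subrr.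
  by move/subr0_eq ->.
- move=> k v a w b [m [Hm /= ->]] [m' [Hm' /= ->]]; exists (k *: m + m'); split => [c0 L0|] /=.
    by rewrite L0 (coact_lin cE L0 Lf) Hm // Hm'.
  by rewrite Lal.
- by exists 0; split => [c0 L0|] /=; [rewrite lin0 // tev0 | rewrite lin0].
exists c; split => // m; rewrite /lact ractE //.
have HG : G0 (\sum_(p <- coact cE m) f p.2 *: p.1, al m).
  exists m; split => // c' Lc' /=; rewrite lin_sum //; apply: eq_bigr => p _.
  by rewrite linZ // mulrC.
rewrite -(Hc _ _ HG) lin_sum //; apply: eq_bigr => p _.
by rewrite linZ // mulrC.
Qed.

End Main.

Theorem lemma1p4 (K : fieldType) (C : lmodType K) (cC : coalgebra C)
  (E : lmodType K) (cE : comodule cC E) (iota : E -> C) (S : E -> Prop) :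
  colinear (coact cE) (delta cC) iota -> injective iota ->
  simple_subcomod cE S -> inj_comodule cE -> essential_in cE S ->
  maximal_submod cE (perp S) /\ small_submod cE (perp S) /\
  (forall f : E -> K, lin_fun f -> ~ perp S f -> generates cE f) /\
  indecomposable_dual cE.
Proof.
move=> _ _ simp _ ess.
have [subS [[x0 [Sx0 nx0]] _]] := simp.
have [h [Lh [_ hx]]] : exists h : E -> K, lin_fun h /\ (forall s, s = 0 -> h s = 0) /\ h x0 = 1.
  have sub0 : subspace (fun v : E => v = 0).
    by split => // a1 x1 y1 -> ->; rewrite scaler0 addr0.
  exact: (sep sub0 nx0).
have genf : forall f, lin_fun f -> ~ perp S f -> generates cE f.
  move=> f Lf nP Q [QL [Q0 [QD QL']]] Qf al Lal.
  have [s [Ss fs]] : exists s, S s /\ f s != 0.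
    apply: contrapT => nn; apply: nP; split => // m Sm; apply: contrapT => ne.
    by apply: nn; exists m; split => //; apply/eqP.
  have [c [Lc Hc]] := gen simp ess Lf Ss fs Lal.
  have -> : al = lact cE c f by apply: funext => m; rewrite Hc.
  exact: QL' c f Lc Qf.
have Pmod : dual_submod cE (perp S).
  split; first by move=> al [].
  split; first by split => [a x y|m _] //; rewrite mulr0 addr0.
  split.
  - move=> a al be [La Sa] [Lb Sb]; split.
      by move=> k x y; rewrite La Lb; ring.
    by move=> m Sm; rewrite Sa // Sb // mulr0 addr0.
  - move=> c al Lc [La Sa]; split.
      by move=> k x y; rewrite /lact !ractE // coact_lin.
    by move=> m Sm; rewrite /lact ractE //; exact: subS.2 m Sm c al Lc La Sa.
have hnP : ~ perp S h.
  by move=> [_ hS]; move: (hS _ Sx0); rewrite hx => /eqP; rewrite oner_eq0.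
split.
  split => //; split; first by move=> full; exact: hnP (full h Lh).
  move=> Q Qm PQ; case: (EM (forall al, Q al -> perp S al)) => [|nn]; [by left|right].
  apply: contrapT => nfull; apply: nn => al Qal; apply: contrapT => nal; apply: nfull.
  exact: genf al (Qm.1 _ Qal) nal Q Qm Qal.
split.
  split => // Q Qm sf; have [be [ga [Pbe [Qga e]]]] := sf h Lh.
  apply: (genf ga (Qm.1 _ Qga)) => // -[_ gS]; apply: hnP; split => // m Sm.
  by rewrite e Pbe.2 // gS // addr0.
split => //.
split.
  by exists h; split => //; exists x0; rewrite hx => /eqP; rewrite oner_eq0.
move=> P Q Pm Qm disj sf; have [be [ga [Pbe [Qga e]]]] := sf h Lh.
case: (EM (perp S be)) => pb.
  case: (EM (perp S ga)) => pg.
    by exfalso; apply: hnP; split => // m Sm; rewrite e pb.2 // pg.2 // addr0.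
  left => al Pal m; apply: disj => //.
  exact: genf ga (Qm.1 _ Qga) pg Q Qm Qga al (Pm.1 _ Pal).
right => al Qal m; apply: disj => //.
exact: genf be (Pm.1 _ Pbe) pb P Pm Pbe al (Qm.1 _ Qal).
Qed.
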